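(* Let $A$ be a selfadjoint operator on a separable infinite-dimensional Hilbert space $\mathcal{H}$ which is bounded below, let $a<\inf\sigma(A)$, and let $\mathcal{L}_n\subset\operatorname{D}((A-a)^{1/2})$ be a finite-dimensional subspace. Let $\mathcal{G}_n=(A-a)^{1/2}\mathcal{L}_n$ with orthogonal projection $p_n$. Then for every real $\lambda\neq a$, \[ \lambda\in\sigma(\pi_nA|_{\mathcal{L}_n})\iff(\lambda-a)^{-1}\in\sigma\big(p_n(A-a)^{-1}|_{\mathcal{G}_n}\big). \]
   Context: Here $\pi_nA|_{\mathcal{L}_n}:\mathcal{L}_n\to\mathcal{L}_n$ denotes the compression of $A$ defined via the quadratic form: for $x\in\mathcal{L}_n$ it is the unique element $A_nx\in\mathcal{L}_n$ with $\langle y,A_nx\rangle=\langle(A-a)^{1/2}y,(A-a)^{1/2}x\rangle+a\langle y,x\rangle$ for all $y\in\mathcal{L}_n$. *)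

(* Defs.v *)
From mathcomp Require Import all_boot all_order all_algebra.
From mathcomp Require Import reals.
From mathcomp Require Export complex.
Set Implicit Arguments. Unset Strict Implicit. Unset Printing Implicit Defensive.
Import Order.TTheory GRing.Theory Num.Theory.
Local Open Scope ring_scope.

Section Hilbert.
Variable R : realType.
Variable V : lmodType R[i].
Variable ip : V -> V -> R[i].  (* inner product, linear in the first slot *)

Definition nsq (x : V) : R := complex.Re (ip x x).

Definition in_span n (e : 'I_n -> V) (x : V) : Prop :=
  exists c : 'I_n -> R[i], x = \sum_(i < n) c i *: e i.

Record is_separable_inf_dim_hilbert : Prop := {
  ip_linear : forall (c : R[i]) x y z, ip (c *: x + y) z = c * ip x z + ip y z;
  ip_conj : forall x y, ip x y = (ip y x)^*;
  ip_nonneg : forall x, 0 <= ip x x;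
  ip_definite : forall x, ip x x = 0 -> x = 0;
  ip_complete : forall u : nat -> V,
    (forall eps : R, 0 < eps -> exists N, forall m n, (N <= m)%N -> (N <= n)%N ->
       nsq (u m - u n) < eps) ->
    exists l, forall eps : R, 0 < eps -> exists N, forall n, (N <= n)%N -> nsq (u n - l) < eps;
  ip_separable : exists d : nat -> V, forall x (eps : R), 0 < eps ->
    exists n, nsq (x - d n) < eps;
  ip_inf_dim : forall n (e : 'I_n -> V), exists x, ~ in_span e x
}.

(* Unbounded operators are given by a domain D and a map f defined on D. *)
Definition subspace (D : V -> Prop) : Prop :=
  D 0 /\ forall (c : R[i]) x y, D x -> D y -> D (c *: x + y).

Definition linear_on (D : V -> Prop) (f : V -> V) : Prop :=
  forall (c : R[i]) x y, D x -> D y -> f (c *: x + y) = c *: f x + f y.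

Definition dense (D : V -> Prop) : Prop :=
  forall x (eps : R), 0 < eps -> exists y, D y /\ nsq (x - y) < eps.

(* A = A^*: the adjoint has domain {y | exists z, forall x in D, <Ax,y> = <x,z>}. *)
Definition selfadjoint (D : V -> Prop) (f : V -> V) : Prop :=
  [/\ subspace D, linear_on D f, dense D,
      (forall y, D y <-> exists z, forall x, D x -> ip (f x) y = ip x z) &
      (forall x y, D x -> D y -> ip (f x) y = ip x (f y))].

Definition bounded_below (D : V -> Prop) (f : V -> V) : Prop :=
  exists m : R, forall x, D x -> m * nsq x <= complex.Re (ip (f x) x).

Definition in_resolvent (D : V -> Prop) (f : V -> V) (mu : R[i]) : Prop :=
  (forall y, exists x, D x /\ f x - mu *: x = y) /\
  exists c : R, forall x, D x -> nsq x <= c * nsq (f x - mu *: x).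

Definition spectrum (D : V -> Prop) (f : V -> V) (mu : R[i]) : Prop :=
  ~ in_resolvent D f mu.

Definition below_spectrum (D : V -> Prop) (f : V -> V) (a : R) : Prop :=
  exists b : R, a < b /\ forall mu, spectrum D f mu -> (b%:C)%C <= mu.

Definition is_sqrt_shift (DA : V -> Prop) (f : V -> V) (a : R)
    (DS : V -> Prop) (s : V -> V) : Prop :=
  [/\ selfadjoint DS s,
      (forall x, DS x -> 0 <= ip (s x) x),
      (forall x, DA x <-> (DS x /\ DS (s x))) &
      (forall x, DA x -> s (s x) = f x - (a%:C)%C *: x)].

Definition spectrum_on (W : V -> Prop) (T : V -> V) (mu : R[i]) : Prop :=
  ~ ((forall y, W y -> exists x, W x /\ T x - mu *: x = y) /\
     (forall x, W x -> T x - mu *: x = 0 -> x = 0)).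

End Hilbert.

(* Main.v *)
Require Import Defs.
From mathcomp Require Import all_boot all_order all_algebra.
From mathcomp Require Import reals complex.
From mathcomp Require Import ring.
Import Order.TTheory GRing.Theory Num.Theory.
Local Open Scope ring_scope.

Section IP.
Context (R : realType) (V : lmodType R[i]) (ip : V -> V -> R[i])
  (HH : is_separable_inf_dim_hilbert ip).

Lemma ip0l z : ip 0 z = 0.
Proof.
have := ip_linear HH 1 0 0 z; rewrite scale1r addr0 mul1r => h.
by apply/eqP; rewrite -(subrr (ip 0 z)) {2}h addrK.
Qed.

Lemma ipDl x y z : ip (x + y) z = ip x z + ip y z.
Proof. by have := ip_linear HH 1 x y z; rewrite scale1r mul1r. Qed.

Lemma ipZl c x z : ip (c *: x) z = c * ip x z.
Proof. by have := ip_linear HH c x 0 z; rewrite addr0 ip0l addr0. Qed.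

Lemma ipBl x y z : ip (x - y) z = ip x z - ip y z.
Proof. by rewrite ipDl -scaleN1r ipZl mulN1r. Qed.

Lemma ipDr z x y : ip z (x + y) = ip z x + ip z y.
Proof. by rewrite !(ip_conj HH z) ipDl rmorphD. Qed.

Lemma ipZr z c x : ip z (c *: x) = Num.conj c * ip z x.
Proof. by rewrite !(ip_conj HH z) ipZl rmorphM. Qed.

Lemma ipBr z x y : ip z (x - y) = ip z x - ip z y.
Proof. by rewrite ipDr -scaleN1r ipZr rmorphN rmorph1 mulN1r. Qed.

Lemma ip0r z : ip z 0 = 0.
Proof. by rewrite (ip_conj HH) ip0l rmorph0. Qed.

End IP.

Lemma conjR (R : realType) (r : R) : Num.conj (r%:C)%C = (r%:C)%C.
Proof. by apply: conj_Creal; apply/complex_realP; exists r. Qed.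
Theorem lemma4p5 (R : realType) (V : lmodType R[i]) (ip : V -> V -> R[i])
  (DA : V -> Prop) (A : V -> V) (a : R)
  (DS : V -> Prop) (S : V -> V)        (* S = (A - a)^{1/2} *)
  (Rinv : V -> V)                      (* Rinv = (A - a)^{-1} *)
  (n : nat) (e : 'I_n -> V)            (* L_n = span e *)
  (P : V -> V)                         (* p_n *)
  (An : V -> V) :                      (* pi_n A |_{L_n} *)
  is_separable_inf_dim_hilbert ip ->
  selfadjoint ip DA A ->
  bounded_below ip DA A ->
  below_spectrum ip DA A a ->
  is_sqrt_shift ip DA A a DS S ->
  (forall y, DA (Rinv y) /\ A (Rinv y) - (a%:C)%C *: Rinv y = y) ->
  (forall i, DS (e i)) ->
  let L := in_span e in
  let G := fun y => exists x, L x /\ y = S x in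
  (forall v, G (P v) /\ forall y, G y -> ip (v - P v) y = 0) ->
  (forall x, L x -> L (An x) /\
     forall y, L y -> ip y (An x) = ip (S y) (S x) + (a%:C)%C * ip y x) ->
  forall lambda : R, lambda != a ->
    (spectrum_on L An (lambda%:C)%C <->
     spectrum_on G (fun y => P (Rinv y)) (((lambda - a)^-1)%:C)%C).
Proof.
move=> HH _ _ [b [ab Hb]] [[DSsub Slin _ _ Ssym] _ DAiff SS] Rinvh eDS L G Ph Anh
  lambda lna.
have ip0l := @ip0l _ _ _ HH; have ipDl := @ipDl _ _ _ HH; have ipZl := @ipZl _ _ _ HH.
have ipBl := @ipBl _ _ _ HH; have ipBr := @ipBr _ _ _ HH; have ipDr := @ipDr _ _ _ HH.
have ipZr := @ipZr _ _ _ HH; have ip0r := @ip0r _ _ _ HH.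
have [DS0 DSl] := DSsub.
have DSD : forall x y, DS x -> DS y -> DS (x + y).
  by move=> x y hx hy; have := DSl 1 x y hx hy; rewrite scale1r.
have DSZ : forall k x, DS x -> DS (k *: x).
  by move=> k x hx; have := DSl k x 0 hx DS0; rewrite addr0.
have DSB : forall x y, DS x -> DS y -> DS (x - y).
  by move=> x y hx hy; rewrite -scaleN1r; apply: DSD => //; apply: DSZ.
have S0 : S 0 = 0.
  by have := Slin (-1) 0 0 DS0 DS0; rewrite scaler0 addr0 scaleN1r addNr.
have SD : forall x y, DS x -> DS y -> S (x + y) = S x + S y.
  by move=> x y hx hy; have := Slin 1 x y hx hy; rewrite !scale1r.
have SZ : forall k x, DS x -> S (k *: x) = k *: S x.
  by move=> k x hx; have := Slin k x 0 hx DS0; rewrite !addr0 S0 addr0.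
have SB : forall x y, DS x -> DS y -> S (x - y) = S x - S y.
  move=> x y hx hy; have -> : x - y = x + (-1) *: y by rewrite scaleN1r.
  rewrite SD //; last exact: DSZ.
  by rewrite SZ // scaleN1r.
have AI : forall z, DA z -> A z - (a%:C)%C *: z = 0 -> z = 0.
  move=> z hz h0; have [//|nz] := eqVneq z 0.
  have : spectrum ip DA A (a%:C)%C.
    move=> [_ [C HC]]; move: (HC z hz); rewrite h0 /nsq ip0l mulr0 => hle.
    move: (ip_nonneg HH z); rewrite lecE /=.
    move/andP=> [/eqP hI hR].
    have hre : complex.Re (ip z z) = 0 by apply/eqP; rewrite eq_le hle hR.
    suff : ip z z = 0 by move/(ip_definite HH)/eqP; rewrite (negPf nz).
    by move: hI hre; case: (ip z z) => r i /= -> ->.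
  by move/Hb; rewrite lecR leNgt ab.
have Sinj : forall z, DS z -> S z = 0 -> z = 0.
  move=> z hz h0; apply: AI.
    by apply/DAiff; rewrite h0.
  by rewrite -SS ?h0 ?S0 //; apply/DAiff; rewrite h0.
have L0 : L 0 by exists (fun _ => 0); rewrite big1 // => i _; rewrite scale0r.
have LD : forall x y, L x -> L y -> L (x + y).
  move=> ? ? [cx ->] [cy ->]; exists (fun i => cx i + cy i).
  by rewrite -big_split /=; apply: eq_bigr => i _; rewrite scalerDl.
have LZ : forall k x, L x -> L (k *: x).
  move=> k ? [cx ->]; exists (fun i => k * cx i).
  by rewrite scaler_sumr; apply: eq_bigr => i _; rewrite scalerA.
have LB : forall x y, L x -> L y -> L (x - y).
  by move=> x y hx hy; rewrite -scaleN1r; apply: LD => //; apply: LZ.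
have LDS : forall x, L x -> DS x.
  move=> ? [cx ->]; apply: (big_ind DS) => //.
  by move=> i _; apply: DSZ.
have GD : forall x y, G x -> G y -> G (x + y).
  move=> ? ? [x1 [hx ->]] [y1 [hy ->]]; exists (x1 + y1); split; first exact: LD.
  by rewrite SD //; apply: LDS.
have GZ : forall k x, G x -> G (k *: x).
  move=> k ? [x1 [hx ->]]; exists (k *: x1); split; first exact: LZ.
  by rewrite SZ //; apply: LDS.
have GB : forall x y, G x -> G y -> G (x - y).
  by move=> x y hx hy; rewrite -scaleN1r; apply: GD => //; apply: GZ.
have GS : forall x, L x -> G (S x) by move=> x hx; exists x.
have LZe : forall u, L u -> (forall y, L y -> ip u y = 0) -> u = 0.
  by move=> u hu h; apply: (ip_definite HH); apply: h.
have GZe : forall g, G g -> (forall y, L y -> ip g (S y) = 0) -> g = 0.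
  move=> ? [x1 [hx ->]] h; apply: (ip_definite HH); exact: h.
have K2 : forall v y, L y -> ip (P v) (S y) = ip v (S y).
  move=> v y hy; have [_ h] := Ph v; move: (h _ (GS _ hy)).
  by rewrite ipBl => /eqP; rewrite subr_eq0 => /eqP ->.
have K3 : forall x y, L x -> L y -> ip (Rinv (S x)) (S y) = ip x y.
  move=> x y hx hy; set w := Rinv (S x).
  have [hw hAw] := Rinvh (S x).
  have [hDw hDSw] := proj1 (DAiff w) hw.
  have hSw : S w = x.
    apply/eqP; rewrite -subr_eq0; apply/eqP; apply: Sinj.
      by apply: DSB => //; apply: LDS.
    rewrite SB ?LDS //; last exact: LDS. by rewrite (SS w hw) hAw subrr.
  by rewrite -(Ssym w y hDw (LDS y hy)) hSw.
set lC := (lambda%:C)%C; set aC := (a%:C)%C.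
set mu := ((lambda - a)^-1%:C)%C.
have clC : Num.conj lC = lC by exact: conjR.
have caC : Num.conj aC = aC by exact: conjR.
have cz : lambda - a != 0 by rewrite subr_eq0.
have muc : mu * (lC - aC) = 1.
  by rewrite /mu /lC /aC -rmorphB -rmorphM mulVf.
have mu0 : mu != 0.
  by apply/eqP => h; move: muc; rewrite h mul0r => /eqP; rewrite eq_sym oner_eq0.
have Kform : forall x y, L x -> L y ->
    ip (An x - lC *: x) y = ip (S x) (S y) - (lC - aC) * ip x y.
  move=> x y hx hy; rewrite (ip_conj HH) ipBr ipZr clC (proj2 (Anh x hx) y hy).
  rewrite !rmorphB !rmorphD !rmorphM /= ?conjR ?clC -!(ip_conj HH) /lC /aC; ring.
have Tform : forall x y, L x -> L y ->
    ip (P (Rinv (S x)) - mu *: S x) (S y) = - mu * ip (An x - lC *: x) y.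
  move=> x y hx hy; rewrite ipBl ipZl K2 // K3 // Kform //.
  by rewrite -{1}[ip x y]mul1r -muc; ring.
have Hn : forall x0 y, L x0 -> L y -> ip (S x0) (S y) = ip (An x0 - aC *: x0) y.
  move=> x0 y hx hy; rewrite ipBl ipZl [ip (An x0) y](ip_conj HH) (proj2 (Anh x0 hx) y hy).
  rewrite rmorphD rmorphM /= ?caC ?conjR -!(ip_conj HH) /aC; ring.
have LA : forall x k, L x -> L (An x - k *: x).
  by move=> x k hx; apply: LB; [exact: (proj1 (Anh x hx))| exact: LZ].
have GT : forall x, L x -> G (P (Rinv (S x)) - mu *: S x).
  by move=> x hx; apply: GB; [exact: (proj1 (Ph _))| apply: GZ; apply: GS].
split; apply: contra_not => -[Sur Inj]; split.
- move=> y0 hy0; have [g [[x [hx ->]] hg]] :=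
    Sur _ (GZ (- mu) _ (proj1 (Ph (Rinv (S y0))))).
  exists x; split => //; apply/eqP; rewrite -subr_eq0; apply/eqP.
  apply: LZe => [|y hy]; first by apply: LB => //; apply: LA.
  have h1 := Tform x y hx hy; rewrite /= in hg.
  rewrite hg ipZl K2 // K3 // in h1.
  rewrite ipBl; apply/eqP; rewrite subr_eq0; apply/eqP.
  apply: (mulfI (x := - mu)); first by rewrite oppr_eq0.
  by rewrite -h1.
- move=> x hx hu; apply: (Sinj _ (LDS _ hx)); apply: (Inj _ (GS _ hx)).
  apply: (GZe _ (GT _ hx)) => y hy.
  by rewrite Tform // hu ip0l mulr0.
- move=> h [x0 [hx0 ->]].
  have [x [hx hxe]] := Sur _ (LZ (-(lC - aC)) _ (LA x0 aC hx0)).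
  exists (S x); split; first exact: GS.
  apply/eqP; rewrite -subr_eq0; apply/eqP; apply: GZe.
    by apply: GB; [exact: GT | exact: GS].
  move=> y hy; rewrite /= ipBl Tform // hxe ipZl Hn //.
  by rewrite mulrA mulrNN muc mul1r subrr.
- move=> g [x [hx ->]] hg; rewrite /= in hg.
  have hu : An x - lC *: x = 0.
    apply: (LZe _ (LA _ _ hx)) => y hy.
    have := Tform x y hx hy; rewrite hg ip0l => /esym /eqP.
    by rewrite mulf_eq0 oppr_eq0 (negPf mu0) /= => /eqP.
  by rewrite (Inj x hx hu) S0.
Qed.
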